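(* Let $\mathfrak T_{\rm pr}\subseteq\mathfrak T$ be the ($G_\delta$) set of non-empty pruned normal trees, and let $\le^{\rm pr}_{\boldsymbol\Sigma^1_1},\equiv^{\rm pr}_{\boldsymbol\Sigma^1_1},\not\subseteq^{\rm pr}_{\boldsymbol\Sigma^1_1},\neq^{\rm pr}_{\boldsymbol\Sigma^1_1}$ be the restrictions to $\mathfrak T_{\rm pr}$ of the corresponding relations. Then (i) the pair $(\le^{\rm pr}_{\boldsymbol\Sigma^1_1},\not\subseteq^{\rm pr}_{\boldsymbol\Sigma^1_1})$ is complete for the class $\mathcal C_{\rm qo}$ of analytic quasiorders, and (ii) the pair $(\equiv^{\rm pr}_{\boldsymbol\Sigma^1_1},\neq^{\rm pr}_{\boldsymbol\Sigma^1_1})$ is complete for the class $\mathcal C_{\rm eq}$ of analytic equivalence relations.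
   Context: For finite sequences $s,t\in\omega^{<\omega}$, $s\le t$ means $|s|=|t|$ and $s(i)\le t(i)$ for all $i$; $(s+t)(i)=s(i)+t(i)$. A normal tree on $2\times\omega$ is a set $T$ of pairs $(u,s)\in 2^{<\omega}\times\omega^{<\omega}$ with $|u|=|s|$, containing $(\emptyset,\emptyset)$, closed under initial segments, and such that $(u,s)\in T$, $s\le t$ imply $(u,t)\in T$; $\mathfrak T$ is the space of normal trees (closed in $2^{(2\times\omega)^{<\omega}}$). A tree is pruned if every element has a proper extension in it. $A(T)=\{\alpha\in 2^\omega:\exists\beta\in\omega^\omega\,\forall n\,(\alpha|_n,\beta|_n)\in T\}$. $S\le_{\boldsymbol\Sigma^1_1}T$ iff $\exists\alpha\in\omega^\omega\,\forall(u,s)\in S\,(u,s+\alpha|_{|s|})\in T$; $S\equiv_{\boldsymbol\Sigma^1_1}T$ iff both $S\le_{\boldsymbol\Sigma^1_1} T$ and $T\le_{\boldsymbol\Sigma^1_1} S$; $S\not\subseteq_{\boldsymbol\Sigma^1_1}T$ iff $A(S)\not\subseteq A(T)$; $S\neq_{\boldsymbol\Sigma^1_1}T$ iff $A(S)\neq A(T)$. A Borel homomorphism from a pair $(R_1,R_2)$ of relations on standard Borel $X$ to a pair $(S_1,S_2)$ on $Y$ is a Borel $f:X\to Y$ with $xR_iy\Rightarrow f(x)S_if(y)$ for $i=1,2$. A pair $(R_1,R_2)$ is complete for a class $\mathcal C$ of relations if every $R\in\mathcal C$ admits a Borel homomorphism from $(R,\neg R)$ to $(R_1,R_2)$, and some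 $R\in\mathcal C$ admits a Borel homomorphism from $(R_1,R_2)$ to $(R,\neg R)$. *)

(* Defs.v *)
From Stdlib Require Import List Arith.
Import ListNotations.
Set Implicit Arguments.

Definition sigma_algebra {X : Type} (M : (X -> Prop) -> Prop) : Prop :=
  M (fun _ => True) /\
  (forall A, M A -> M (fun x => ~ A x)) /\
  (forall A : nat -> X -> Prop, (forall n, M (A n)) -> M (fun x => exists n, A n x)).

Definition generated {X : Type} (G : (X -> Prop) -> Prop) : (X -> Prop) -> Prop :=
  fun A => forall M, sigma_algebra M -> (forall B, G B -> M B) -> M A.

Record MSpace : Type := MkMSpace {
  carrier :> Type;
  meas : (carrier -> Prop) -> Prop }.

Definition measurable_map (X Y : MSpace) (f : X -> Y) : Prop :=
  forall B, meas Y B -> meas X (fun x => B (f x)).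

Definition prodM (X Y : MSpace) : MSpace :=
  MkMSpace (generated (fun C : X * Y -> Prop =>
     exists A B, meas X A /\ meas Y B /\
       forall p, C p <-> (A (fst p) /\ B (snd p)))).

Definition subM (X : MSpace) (P : X -> Prop) : MSpace :=
  MkMSpace (fun A : {x : X | P x} -> Prop =>
     exists B, meas X B /\ forall y, A y <-> B (proj1_sig y)).

Definition Cantor : MSpace :=
  MkMSpace (generated (fun C : (nat -> bool) -> Prop =>
     exists n b, forall a, C a <-> a n = b)).

Definition Baire : MSpace :=
  MkMSpace (generated (fun C : (nat -> nat) -> Prop =>
     exists n k, forall a, C a <-> a n = k)).

(* A standard Borel space: Borel isomorphic to a Borel subset of 2^omega
   (with the subspace sigma-algebra). *)
Definition standard_borel (X : MSpace) : Prop :=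
  exists f : X -> (nat -> bool),
    (forall x y, f x = f y -> x = y) /\
    measurable_map X Cantor f /\
    meas Cantor (fun a => exists x, f x = a) /\
    (forall A, meas X A -> meas Cantor (fun a => exists x, A x /\ f x = a)).

Definition analytic_rel (X : MSpace) (R : X -> X -> Prop) : Prop :=
  exists B : (X * X) * (nat -> nat) -> Prop,
    meas (prodM (prodM X X) Baire) B /\
    forall x y, R x y <-> exists b, B ((x, y), b).

Definition quasiorder {X : Type} (R : X -> X -> Prop) : Prop :=
  (forall x, R x x) /\ (forall x y z, R x y -> R y z -> R x z).

Definition equivalence_rel {X : Type} (R : X -> X -> Prop) : Prop :=
  (forall x, R x x) /\ (forall x y, R x y -> R y x) /\
  (forall x y z, R x y -> R y z -> R x z).

Definition C_qo (X : MSpace) (R : X -> X -> Prop) : Prop :=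
  standard_borel X /\ analytic_rel X R /\ quasiorder R.

Definition C_eq (X : MSpace) (R : X -> X -> Prop) : Prop :=
  standard_borel X /\ analytic_rel X R /\ equivalence_rel R.

Definition borel_hom (X Y : MSpace) (R1 R2 : X -> X -> Prop)
    (S1 S2 : Y -> Y -> Prop) : Prop :=
  exists f : X -> Y, measurable_map X Y f /\
    (forall x y, R1 x y -> S1 (f x) (f y)) /\
    (forall x y, R2 x y -> S2 (f x) (f y)).

Definition complete_for (C : forall X : MSpace, (X -> X -> Prop) -> Prop)
    (Y : MSpace) (S1 S2 : Y -> Y -> Prop) : Prop :=
  (forall (X : MSpace) (R : X -> X -> Prop), C X R ->
      borel_hom X Y R (fun x y => ~ R x y) S1 S2) /\
  (exists (X : MSpace) (R : X -> X -> Prop), C X R /\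
      borel_hom Y X S1 S2 R (fun x y => ~ R x y)).

(* a tree is (the characteristic function of) a subset of
   2^{<omega} x omega^{<omega}; the space of all such is 2^{(2 x omega)^{<omega}} *)
Definition Tree := (list bool * list nat) -> bool.

(* product (= Borel, the index set being countable) sigma-algebra *)
Definition TreeSpace : MSpace :=
  MkMSpace (generated (fun C : Tree -> Prop =>
     exists p b, forall T, C T <-> T p = b)).

Definition le_seq (s t : list nat) : Prop :=
  length s = length t /\ forall i, i < length s -> nth i s 0 <= nth i t 0.

Definition restr {A : Type} (a : nat -> A) (n : nat) : list A := map a (seq 0 n).

Definition add_restr (s : list nat) (a : nat -> nat) : list nat :=
  map (fun i => nth i s 0 + a i) (seq 0 (length s)).

Definition normal_tree (T : Tree) : Prop :=
  T ([], []) = true /\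
  (forall u s, T (u, s) = true -> length u = length s) /\
  (forall u s n, T (u, s) = true -> T (firstn n u, firstn n s) = true) /\
  (forall u s t, T (u, s) = true -> le_seq s t -> T (u, t) = true).

Definition pruned (T : Tree) : Prop :=
  forall u s, T (u, s) = true ->
    exists u' s', T (u', s') = true /\ length u < length u' /\
      firstn (length u) u' = u /\ firstn (length s) s' = s.

(* non-empty: contains some element (automatic for normal trees) *)
Definition nonempty_tree (T : Tree) : Prop := exists p, T p = true.

Definition Tpr_pred (T : Tree) : Prop :=
  normal_tree T /\ pruned T /\ nonempty_tree T.

Definition Tpr : MSpace := subM TreeSpace Tpr_pred.

Definition A_of (T : Tree) (alpha : nat -> bool) : Prop :=
  exists beta : nat -> nat, forall n, T (restr alpha n, restr beta n) = true.

Definition le_S11 (S T : Tree) : Prop :=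
  exists alpha : nat -> nat, forall u s, S (u, s) = true ->
    T (u, add_restr s alpha) = true.

Definition equiv_S11 (S T : Tree) : Prop := le_S11 S T /\ le_S11 T S.

Definition nsubset_S11 (S T : Tree) : Prop :=
  ~ (forall alpha, A_of S alpha -> A_of T alpha).

Definition neq_S11 (S T : Tree) : Prop :=
  ~ (forall alpha, A_of S alpha <-> A_of T alpha).

Definition le_pr (S T : Tpr) : Prop := le_S11 (proj1_sig S) (proj1_sig T).
Definition equiv_pr (S T : Tpr) : Prop := equiv_S11 (proj1_sig S) (proj1_sig T).
Definition nsubset_pr (S T : Tpr) : Prop := nsubset_S11 (proj1_sig S) (proj1_sig T).
Definition neq_pr (S T : Tpr) : Prop := neq_S11 (proj1_sig S) (proj1_sig T).

(* Main.v *)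
Require Import Defs.
From Stdlib Require Import List Arith Lia PeanoNat Cantor.
From Stdlib Require Import Classical FunctionalExtensionality PropExtensionality ClassicalEpsilon.
Import ListNotations.


Lemma pred_ext {X} (A B : X -> Prop) : (forall x, A x <-> B x) -> A = B.
Proof. intro H; apply functional_extensionality; intro x; apply propositional_extensionality; apply H. Qed.

Lemma M_ext {X} (M : (X->Prop)->Prop) (A B : X -> Prop) : M A -> (forall x, A x <-> B x) -> M B.
Proof. intros HA H; rewrite <- (pred_ext _ _ H); exact HA. Qed.

Definition countable (I : Type) := exists g : I -> nat, forall i j, g i = g j -> i = j.

Section SA.
Context {X : Type} (M : (X -> Prop) -> Prop) (HM : sigma_algebra M).
Lemma sa_True : M (fun _ => True). Proof. apply HM. Qed.
Lemma sa_compl A : M A -> M (fun x => ~ A x). Proof. apply HM. Qed.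
Lemma sa_union (A : nat -> X -> Prop) : (forall n, M (A n)) -> M (fun x => exists n, A n x).
Proof. apply HM. Qed.
Lemma sa_False : M (fun _ => False).
Proof. eapply M_ext. apply sa_compl, sa_True. simpl; tauto. Qed.
Lemma sa_const (P : Prop) : M (fun _ => P).
Proof. destruct (classic P) as [H|H].
  eapply M_ext. apply sa_True. simpl; tauto.
  eapply M_ext. apply sa_False. simpl; tauto. Qed.
Lemma sa_inter (A : nat -> X -> Prop) : (forall n, M (A n)) -> M (fun x => forall n, A n x).
Proof. intros H. eapply M_ext. apply sa_compl, sa_union. intro n; apply sa_compl, H.
  intro x; simpl; split.
  intros H1 n; apply NNPP; intro H2; apply H1; eauto.
  intros H1 [n H2]; auto. Qed.
Lemma sa_or A B : M A -> M B -> M (fun x => A x \/ B x).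
Proof. intros HA HB. eapply M_ext. apply (sa_union (fun n => match n with 0 => A | _ => B end)).
  intros [|n]; auto. intro x; split. intros [[|n] H]; auto. intros [H|H]; [exists 0|exists 1]; auto. Qed.
Lemma sa_and A B : M A -> M B -> M (fun x => A x /\ B x).
Proof. intros HA HB. eapply M_ext. apply sa_compl. apply (sa_or (fun x => ~ A x) (fun x => ~ B x)); apply sa_compl; eauto.
  intro x; simpl; tauto. Qed.
Lemma sa_impl A B : M A -> M B -> M (fun x => A x -> B x).
Proof. intros HA HB. eapply M_ext. apply (sa_or (fun x => ~ A x) (B)). apply sa_compl, HA. apply HB.
  intro x; simpl; tauto. Qed.
Lemma sa_iff A B : M A -> M B -> M (fun x => A x <-> B x).
Proof. intros HA HB. eapply M_ext. apply (sa_and (fun x => A x -> B x) (fun x => B x -> A x)); apply sa_impl; eauto. intro x; simpl; tauto. Qed.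
Lemma sa_ex I : countable I -> forall A : I -> X -> Prop, (forall i, M (A i)) -> M (fun x => exists i, A i x).
Proof. intros [g Hg] A HA. eapply M_ext. apply (sa_union (fun n x => exists i, g i = n /\ A i x)).
  intro n. destruct (classic (exists i, g i = n)) as [[i0 Hi0]|Hn].
  eapply M_ext. apply (HA i0). intro x; split. intro; eauto.
  intros [i [Hi Hx]]. assert (i = i0) by (apply Hg; congruence). subst; auto.
  eapply M_ext. apply sa_False. intro x; split. tauto. intros [i [Hi _]]; eauto.
  intro x; split. intros [n [i [_ H]]]; eauto. intros [i H]; eauto. Qed.
Lemma sa_all I : countable I -> forall A : I -> X -> Prop, (forall i, M (A i)) -> M (fun x => forall i, A i x).
Proof. intros Hc A HA. eapply M_ext. apply sa_compl, (sa_ex I Hc). intro i; apply sa_compl, HA.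
  intro x; simpl; split. intros H i; apply NNPP; intro; apply H; eauto. intros H [i Hi]; auto. Qed.
End SA.

Lemma generated_sa {X} (G : (X->Prop)->Prop) : sigma_algebra (generated G).
Proof. split; [|split].
  - intros M HM _; apply HM.
  - intros A HA M HM HG; apply HM; apply HA; auto.
  - intros A HA M HM HG; apply HM; intro n; apply HA; auto. Qed.

Lemma generated_gen {X} (G : (X->Prop)->Prop) A : G A -> generated G A.
Proof. intros HA M _ HG; auto. Qed.

Lemma sa_preimage {X Y} (M : (Y->Prop)->Prop) (h : Y -> X) : sigma_algebra M ->
  sigma_algebra (fun A : X -> Prop => M (fun y => A (h y))).
Proof. intros [H1 [H2 H3]]; split; [|split]; auto. Qed.

Lemma countable_nat : countable nat. Proof. exists (fun n => n); auto. Qed.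
Lemma countable_bool : countable bool.
Proof. exists (fun b : bool => if b then 1 else 0). intros [] []; simpl; congruence. Qed.
Lemma countable_prod A B : countable A -> countable B -> countable (A * B).
Proof. intros [g Hg] [h Hh]. exists (fun p => to_nat (g (fst p), h (snd p))).
  intros [a b] [c d] H; cbn [fst snd] in H. apply (f_equal of_nat) in H. rewrite !cancel_of_to in H.
  inversion H. f_equal; auto. Qed.
Fixpoint lcode {A} (g : A -> nat) (l : list A) : nat :=
  match l with [] => 0 | a :: l => S (to_nat (g a, lcode g l)) end.
Lemma countable_list A : countable A -> countable (list A).
Proof. intros [g Hg]. exists (lcode g). induction i as [|a i IH]; destruct j as [|b j]; cbn [lcode]; try congruence.
  intro H; apply eq_add_S in H as H'. apply (f_equal of_nat) in H'. rewrite !cancel_of_to in H'.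
  inversion H'. f_equal; auto. Qed.

Lemma cnt_lb : countable (list bool). Proof. apply countable_list, countable_bool. Qed.
Lemma cnt_ln : countable (list nat). Proof. apply countable_list, countable_nat. Qed.
Lemma cnt_key : countable (list bool * list nat). Proof. apply countable_prod; [apply cnt_lb|apply cnt_ln]. Qed.
Lemma length_restr {A} (a : nat -> A) n : length (restr a n) = n.
Proof. unfold restr; rewrite length_map, length_seq; auto. Qed.
Lemma nth_restr {A} (a : nat -> A) n i d : i < n -> nth i (restr a n) d = a i.
Proof. intro H; unfold restr. rewrite (nth_indep _ d (a 0)) by (rewrite length_map, length_seq; auto).
  rewrite map_nth, seq_nth; auto. Qed.
Lemma firstn_restr {A} (a : nat -> A) m n : firstn m (restr a n) = restr a (min m n).
Proof. apply nth_ext with (d := a 0) (d' := a 0).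
  rewrite length_firstn, !length_restr; auto.
  intros i Hi. rewrite length_firstn, length_restr in Hi.
  rewrite nth_firstn. destruct (Nat.ltb_spec i m); [|lia]. rewrite !nth_restr; auto; lia. Qed.
Lemma restr_S {A} (a : nat -> A) n : restr a (S n) = restr a n ++ [a n].
Proof. unfold restr. rewrite seq_S, map_app; auto. Qed.
Lemma restr_ext {A} (a b : nat -> A) n : (forall i, i < n -> a i = b i) -> restr a n = restr b n.
Proof. intro H; unfold restr; apply map_ext_in; intros i Hi; apply in_seq in Hi; apply H; lia. Qed.
Lemma restr_eq_nth {A} (a : nat -> A) n (l : list A) d :
  restr a n = l <-> (length l = n /\ forall i, i < n -> a i = nth i l d).
Proof. split.
  - intros <-. rewrite length_restr; split; auto. intros; rewrite nth_restr; auto.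
  - intros [H1 H2]. apply nth_ext with (d := d) (d' := d). rewrite length_restr; auto.
    intros i Hi; rewrite length_restr in Hi; rewrite nth_restr by auto; auto. Qed.

Lemma length_add_restr s a : length (add_restr s a) = length s.
Proof. unfold add_restr; rewrite length_map, length_seq; auto. Qed.
Lemma nth_add_restr s a i : i < length s -> nth i (add_restr s a) 0 = nth i s 0 + a i.
Proof. intro H; unfold add_restr. set (f := fun i => nth i s 0 + a i).
  rewrite (nth_indep _ 0 (f 0)) by (rewrite length_map, length_seq; auto).
  rewrite map_nth, seq_nth; auto. Qed.
Lemma add_restr_nth_eq s a l : length l = length s -> (forall i, i < length s -> nth i l 0 = nth i s 0 + a i) ->
  add_restr s a = l.
Proof. intros H1 H2. apply nth_ext with (d:=0) (d':=0). rewrite length_add_restr; auto.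
  intros i Hi; rewrite length_add_restr in Hi. rewrite nth_add_restr, H2; auto. Qed.
Lemma firstn_add_restr m s a : firstn m (add_restr s a) = add_restr (firstn m s) a.
Proof. symmetry; apply add_restr_nth_eq. rewrite !length_firstn, length_add_restr; auto.
  intros i Hi. rewrite length_firstn in Hi. rewrite !nth_firstn. destruct (Nat.ltb_spec i m); [|lia].
  rewrite nth_add_restr; auto; lia. Qed.
Lemma add_restr_assoc s a b : add_restr (add_restr s a) b = add_restr s (fun i => a i + b i).
Proof. symmetry. apply add_restr_nth_eq. rewrite !length_add_restr; auto.
  intros i Hi. rewrite nth_add_restr by (rewrite length_add_restr; auto). rewrite nth_add_restr by auto. lia. Qed.
Lemma add_restr_restr b a n : add_restr (restr b n) a = restr (fun i => b i + a i) n.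
Proof. apply add_restr_nth_eq. rewrite !length_restr; auto.
  intros i Hi. rewrite length_restr in Hi. rewrite !nth_restr; auto. Qed.
Lemma add_restr_ext s a b : (forall i, i < length s -> a i = b i) -> add_restr s a = add_restr s b.
Proof. intro H. apply add_restr_nth_eq. rewrite length_add_restr; auto.
  intros i Hi. rewrite nth_add_restr, H; auto. Qed.
Lemma le_seq_refl s : le_seq s s. Proof. split; auto. Qed.
Lemma le_seq_add s a : le_seq s (add_restr s a).
Proof. split. rewrite length_add_restr; auto. intros i Hi; rewrite nth_add_restr; lia. Qed.

Definition mix (b g : nat -> nat) (k : nat) : nat := if Nat.even k then b (Nat.div2 k) else g (Nat.div2 k).
Lemma mix_ev b g i : mix b g (2*i) = b i.
Proof. unfold mix. rewrite Nat.even_even, Nat.div2_double; auto. Qed.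
Lemma mix_od b g i : mix b g (2*i+1) = g i.
Proof. unfold mix. rewrite Nat.even_odd, Nat.div2_odd'; auto. Qed.
Definition ev (d : nat -> nat) i := d (2*i).
Definition od (d : nat -> nat) i := d (2*i+1).
Lemma ev_mix b g : ev (mix b g) = b. Proof. apply functional_extensionality; intro; apply mix_ev. Qed.
Lemma od_mix b g : od (mix b g) = g. Proof. apply functional_extensionality; intro; apply mix_od. Qed.

Lemma choice_ {A B} (R : A -> B -> Prop) : (forall a, exists b, R a b) -> exists f, forall a, R a (f a).
Proof. intros H. exists (fun a => proj1_sig (constructive_indefinite_description _ (H a))).
  intro a; apply (proj2_sig (constructive_indefinite_description _ (H a))). Qed.

Lemma bound_fun (f : nat -> nat) N : exists K, forall m, m < N -> f m < K.
Proof. induction N as [|N [K HK]]. exists 0; intros; lia.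
  exists (max K (S (f N))). intros m Hm. destruct (Nat.eq_dec m N). subst; lia.
  specialize (HK m ltac:(lia)); lia. Qed.
Definition T3 := ((nat -> bool) * (nat -> bool) * (nat -> nat))%type.
Definition agree3 N (t t' : T3) : Prop := forall i, i < N ->
  fst (fst t) i = fst (fst t') i /\ snd (fst t) i = snd (fst t') i /\ snd t i = snd t' i.
Definition agreeB N (g g' : nat -> nat) : Prop := forall i, i < N -> g i = g' i.
Definition closed4 (F : T3 * (nat -> nat) -> Prop) : Prop :=
  forall t g, (forall N, exists t' g', agree3 N t t' /\ agreeB N g g' /\ F (t', g')) -> F (t, g).
Definition Sig11 (P : T3 -> Prop) : Prop :=
  exists F, closed4 F /\ forall t, P t <-> exists g, F (t, g).
Definition Delta (P : T3 -> Prop) : Prop := Sig11 P /\ Sig11 (fun t => ~ P t).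

Lemma agree3_mono N M t t' : M <= N -> agree3 N t t' -> agree3 M t t'.
Proof. intros H1 H2 i Hi; apply H2; lia. Qed.
Lemma agreeB_mono N M t t' : M <= N -> agreeB N t t' -> agreeB M t t'.
Proof. intros H1 H2 i Hi; apply H2; lia. Qed.

Lemma Sig11_ext P Q : Sig11 P -> (forall t, P t <-> Q t) -> Sig11 Q.
Proof. intros HP H; rewrite <- (pred_ext _ _ H); auto. Qed.
Lemma Delta_ext P Q : Delta P -> (forall t, P t <-> Q t) -> Delta Q.
Proof. intros HP H; rewrite <- (pred_ext _ _ H); auto. Qed.

Definition clopen3 (P : T3 -> Prop) : Prop :=
  exists N, forall t t', agree3 N t t' -> (P t <-> P t').
Definition closed3 (P : T3 -> Prop) : Prop :=
  forall t, (forall N, exists t', agree3 N t t' /\ P t') -> P t.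
Lemma closed3_Sig11 P : closed3 P -> Sig11 P.
Proof. intro H. exists (fun x => P (fst x)). split.
  - intros t g Hg. simpl. apply H. intro N. destruct (Hg N) as [t' [g' [H1 [_ H3]]]]. eauto.
  - intro t; simpl; split. intro; exists (fun _ => 0); auto. intros [_ ?]; auto. Qed.
Lemma clopen3_closed P : clopen3 P -> closed3 P.
Proof. intros [N HN] t Ht. destruct (Ht N) as [t' [H1 H2]]. apply (HN _ _ H1); auto. Qed.
Lemma clopen3_compl P : clopen3 P -> clopen3 (fun t => ~ P t).
Proof. intros [N HN]. exists N. intros t t' H. specialize (HN _ _ H). tauto. Qed.
Lemma clopen3_Delta P : clopen3 P -> Delta P.
Proof. intro H; split; apply closed3_Sig11, clopen3_closed; auto. apply clopen3_compl; auto. Qed.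

Lemma Sig11_union (P : nat -> T3 -> Prop) : (forall n, Sig11 (P n)) -> Sig11 (fun t => exists n, P n t).
Proof. intro H. destruct (choice_ _ H) as [Fs HF].
  exists (fun x => Fs (snd x 0) (fst x, fun m => snd x (S m))). split.
  - intros t g Hg. simpl. destruct (HF (g 0)) as [Hc _]. apply Hc.
    intro N. destruct (Hg (S N)) as [t' [g' [H1 [H2 H3]]]]. simpl in H3.
    rewrite <- (H2 0) in H3 by lia. exists t', (fun m => g' (S m)). split; [|split]; auto.
    apply agree3_mono with (S N); auto. intros i Hi; apply H2; lia.
  - intro t; split.
    + intros [n Hn]. apply (HF n) in Hn. destruct Hn as [g Hg].
      exists (fun m => match m with 0 => n | S m => g m end); simpl; auto.
    + intros [g Hg]. simpl in Hg. exists (g 0). apply (HF (g 0)); eauto. Qed.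

Lemma Sig11_inter (P : nat -> T3 -> Prop) : (forall n, Sig11 (P n)) -> Sig11 (fun t => forall n, P n t).
Proof. intro H. destruct (choice_ _ H) as [Fs HF].
  exists (fun x => forall n, Fs n (fst x, fun m => snd x (to_nat (n, m)))). split.
  - intros t g Hg n. simpl. destruct (HF n) as [Hc _]. apply Hc.
    intro N. destruct (bound_fun (fun m => to_nat (n, m)) N) as [K HK].
    destruct (Hg (max N K)) as [t' [g' [H1 [H2 H3]]]]. exists t', (fun m => g' (to_nat (n, m))).
    split; [|split]. apply agree3_mono with (max N K); auto; lia.
    intros i Hi. apply H2. specialize (HK i Hi); lia. apply (H3 n).
  - intro t; split.
    + intro Hn. assert (forall n, exists g, Fs n (t, g)) as Hg by (intro n; apply (HF n); auto).
      destruct (choice_ _ Hg) as [G HG].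
      exists (fun k => G (fst (of_nat k)) (snd (of_nat k))). intro n. cbn [fst snd].
      enough (Heq : (fun m => G (fst (of_nat (to_nat (n, m)))) (snd (of_nat (to_nat (n, m))))) = G n) by (rewrite Heq; exact (HG n)).
      apply functional_extensionality; intro m; rewrite cancel_of_to; auto.
    + intros [g Hg] n. apply (HF n). eauto. Qed.

Lemma Delta_sa : sigma_algebra Delta.
Proof. split; [|split].
  - apply clopen3_Delta. exists 0; intros; tauto.
  - intros A [H1 H2]; split; auto. eapply Sig11_ext; [exact H1|]. intro; simpl; tauto.
  - intros A HA; split. apply Sig11_union; intro n; apply HA.
    eapply Sig11_ext. apply (Sig11_inter (fun n t => ~ A n t)); intro n; apply HA.
    intro t; split. intros H [n Hn]; apply (H n); auto. intros H n Hn; apply H; eauto. Qed.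

Lemma lift_a (A : (nat -> bool) -> Prop) : meas Cantor A -> Delta (fun t : T3 => A (fst (fst t))).
Proof. intro HA. apply (HA (fun A => Delta (fun t : T3 => A (fst (fst t))))).
  apply (sa_preimage Delta (fun t : T3 => fst (fst t)) Delta_sa).
  intros B [n [b Hb]]. eapply Delta_ext. apply clopen3_Delta with (P := fun t : T3 => fst (fst t) n = b).
  exists (S n). intros t t' H. destruct (H n ltac:(lia)) as [-> _]; tauto.
  intro t; rewrite Hb; tauto. Qed.
Lemma lift_b (A : (nat -> bool) -> Prop) : meas Cantor A -> Delta (fun t : T3 => A (snd (fst t))).
Proof. intro HA. apply (HA (fun A => Delta (fun t : T3 => A (snd (fst t))))).
  apply (sa_preimage Delta (fun t : T3 => snd (fst t)) Delta_sa).
  intros B [n [b Hb]]. eapply Delta_ext. apply clopen3_Delta with (P := fun t : T3 => snd (fst t) n = b).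
  exists (S n). intros t t' H. destruct (H n ltac:(lia)) as [_ [-> _]]; tauto.
  intro t; rewrite Hb; tauto. Qed.
Lemma lift_c (A : (nat -> nat) -> Prop) : meas Baire A -> Delta (fun t : T3 => A (snd t)).
Proof. intro HA. apply (HA (fun A => Delta (fun t : T3 => A (snd t)))).
  apply (sa_preimage Delta (fun t : T3 => snd t) Delta_sa).
  intros B [n [b Hb]]. eapply Delta_ext. apply clopen3_Delta with (P := fun t : T3 => snd t n = b).
  exists (S n). intros t t' H. destruct (H n ltac:(lia)) as [_ [_ ->]]; tauto.
  intro t; rewrite Hb; tauto. Qed.

Definition treeOf (F : T3 * (nat -> nat) -> Prop) (u v : list bool) (s : list nat) : Prop :=
  length u = length s /\ length v = length s /\
  exists a b d, F ((a, b, ev d), od d) /\ restr a (length s) = u /\ restr b (length s) = v /\ restr d (length s) = s.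

Lemma Sig11_tree P : Sig11 P -> exists C : list bool -> list bool -> list nat -> Prop,
  (forall u v s m, C u v s -> C (firstn m u) (firstn m v) (firstn m s)) /\
  (forall u v s, C u v s -> length u = length s /\ length v = length s) /\
  (forall a b, (exists beta, P (a, b, beta)) <-> exists d, forall n, C (restr a n) (restr b n) (restr d n)).
Proof. intros [F [HF HP]]. exists (treeOf F). split; [|split].
  - intros u v s m [H1 [H2 [a [b [d [H3 [H4 [H5 H6]]]]]]]].
    split; [|split]. rewrite !length_firstn; congruence. rewrite !length_firstn; congruence.
    exists a, b, d. split; auto. rewrite length_firstn.
    rewrite <- H4, <- H5, <- H6, !firstn_restr. rewrite length_restr in *. auto.
  - intros u v s [H1 [H2 _]]; auto.
  - intros a b; split.
    + intros [beta Hb]. apply HP in Hb. destruct Hb as [g Hg]. exists (mix beta g). intro n.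
      unfold treeOf. rewrite !length_restr. split; [|split]; auto.
      exists a, b, (mix beta g). rewrite ev_mix, od_mix. auto.
    + intros [d Hd]. exists (ev d). apply HP. exists (od d). apply HF. intro N.
      destruct (Hd (2*N+2)) as [_ [_ [a' [b' [d' [H1 [H2 [H3 H4]]]]]]]].
      rewrite length_restr in *. exists (a', b', ev d'), (od d'). split; [|split]; auto.
      * intros i Hi. simpl. unfold ev.
        assert (E: forall {A} (x y : nat -> A) k, restr x (2*N+2) = restr y (2*N+2) -> k < 2*N+2 -> x k = y k).
        { intros A x y k Hxy Hk. rewrite <- (nth_restr x (2*N+2) k (x 0)), <- (nth_restr y (2*N+2) k (x 0)) by auto.
          rewrite Hxy; auto. }
        split; [|split]. symmetry; apply (E _ _ _ i H2); lia. symmetry; apply (E _ _ _ i H3); lia.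
        symmetry; apply (E _ _ _ (2*i) H4); lia.
      * intros i Hi. unfold od. rewrite <- (nth_restr d (2*N+2) (2*i+1) 0), <- (nth_restr d' (2*N+2) (2*i+1) 0) by lia.
        rewrite H4; auto. Qed.
(* ---------- from an analytic relation on X to a tree on 2x2xw ---------- *)
Section Transfer.
Variable X : MSpace.
Variable e : X -> (nat -> bool).
Hypothesis e_inj : forall x y, e x = e y -> x = y.
Hypothesis e_meas : measurable_map X Cantor e.
Hypothesis e_ran : meas Cantor (fun a => exists x, e x = a).
Hypothesis e_img : forall A, meas X A -> meas Cantor (fun a => exists x, A x /\ e x = a).

Definition Img2 (A : X * X -> Prop) (t : T3) : Prop :=
  exists x y, e x = fst (fst t) /\ e y = snd (fst t) /\ A (x, y).
Definition Img (B : X * X * (nat -> nat) -> Prop) (t : T3) : Prop :=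
  exists x y, e x = fst (fst t) /\ e y = snd (fst t) /\ B ((x, y), snd t).

Definition ran2 (t : T3) : Prop := (exists x, e x = fst (fst t)) /\ (exists y, e y = snd (fst t)).
Lemma Delta_ran2 : Delta ran2.
Proof. unfold ran2. apply (sa_and Delta Delta_sa (fun t : T3 => exists x, e x = fst (fst t)) (fun t : T3 => exists y, e y = snd (fst t))).
  apply (lift_a (fun a => exists x, e x = a)); auto. apply (lift_b (fun a => exists x, e x = a)); auto. Qed.

Lemma Img2_Delta A : meas (prodM X X) A -> Delta (Img2 A).
Proof. intro HA. apply (HA (fun A => Delta (Img2 A))).
  - split; [|split].
    + eapply Delta_ext. apply Delta_ran2. intro t; unfold Img2, ran2; split.
      intros [[x Hx] [y Hy]]; eauto. intros [x [y [H1 [H2 _]]]]; eauto.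
    + intros A' HA'. eapply Delta_ext. apply (sa_and Delta Delta_sa ran2 (fun t => ~ Img2 A' t)).
      apply Delta_ran2. apply (sa_compl Delta Delta_sa). auto.
      intro t; unfold Img2, ran2; split.
      * intros [[[x Hx] [y Hy]] H]. exists x, y. split; [|split]; auto. intro HA''. apply H; eauto.
      * intros [x [y [H1 [H2 H3]]]]. split. split; eauto. intros [x' [y' [H1' [H2' H3']]]].
        assert (x = x') by (apply e_inj; congruence). assert (y = y') by (apply e_inj; congruence). subst; auto.
    + intros A' HA'. eapply Delta_ext. apply (sa_union Delta Delta_sa (fun n => Img2 (A' n))). auto.
      intro t; unfold Img2; split. intros [n [x [y [H1 [H2 H3]]]]]; eauto 7.
      intros [x [y [H1 [H2 [n H3]]]]]; eauto 7.
  - intros Cg [A1 [A2 [H1 [H2 H3]]]]. eapply Delta_ext.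
    apply (sa_and Delta Delta_sa (fun t : T3 => exists x, A1 x /\ e x = fst (fst t)) (fun t : T3 => exists y, A2 y /\ e y = snd (fst t))).
    apply (lift_a (fun a => exists x, A1 x /\ e x = a)); auto. apply (lift_b (fun a => exists x, A2 x /\ e x = a)); auto.
    intro t; unfold Img2; split.
    + intros [[x [Hx1 Hx2]] [y [Hy1 Hy2]]]. exists x, y. split; [|split]; auto. apply H3; simpl; auto.
    + intros [x [y [Hx [Hy H]]]]. apply H3 in H. simpl in H. destruct H. split; eauto. Qed.

Lemma Img_Delta B : meas (prodM (prodM X X) Baire) B -> Delta (Img B).
Proof. intro HB. apply (HB (fun B => Delta (Img B))).
  - split; [|split].
    + eapply Delta_ext. apply Delta_ran2. intro t; unfold Img, ran2; split.
      intros [[x Hx] [y Hy]]; eauto. intros [x [y [H1 [H2 _]]]]; eauto.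
    + intros A' HA'. eapply Delta_ext. apply (sa_and Delta Delta_sa ran2 (fun t => ~ Img A' t)).
      apply Delta_ran2. apply (sa_compl Delta Delta_sa). auto.
      intro t; unfold Img, ran2; split.
      * intros [[[x Hx] [y Hy]] H]. exists x, y. split; [|split]; auto. intro HA''. apply H; eauto.
      * intros [x [y [H1 [H2 H3]]]]. split. split; eauto. intros [x' [y' [H1' [H2' H3']]]].
        assert (x = x') by (apply e_inj; congruence). assert (y = y') by (apply e_inj; congruence). subst; auto.
    + intros A' HA'. eapply Delta_ext. apply (sa_union Delta Delta_sa (fun n => Img (A' n))). auto.
      intro t; unfold Img; split. intros [n [x [y [H1 [H2 H3]]]]]; eauto 7.
      intros [x [y [H1 [H2 [n H3]]]]]; eauto 7.
  - intros Cg [A1 [D [H1 [H2 H3]]]]. eapply Delta_ext.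
    apply (sa_and Delta Delta_sa (Img2 A1) (fun t : T3 => D (snd t))).
    apply Img2_Delta; auto. apply lift_c; auto.
    intro t; unfold Img, Img2; split.
    + intros [[x [y [Hx [Hy H]]]] HD]. exists x, y. split; [|split]; auto. apply H3; simpl; auto.
    + intros [x [y [Hx [Hy H]]]]. apply H3 in H. simpl in H. destruct H. split; eauto. Qed.

Definition Rpp (R : X -> X -> Prop) (a b : nat -> bool) : Prop :=
  a = b \/ exists x y, e x = a /\ e y = b /\ R x y.

Lemma Rpp_tree R : analytic_rel X R -> exists C : list bool -> list bool -> list nat -> Prop,
  (forall u v s m, C u v s -> C (firstn m u) (firstn m v) (firstn m s)) /\
  (forall u v s, C u v s -> length u = length s /\ length v = length s) /\
  (forall a b, Rpp R a b <-> exists d, forall n, C (restr a n) (restr b n) (restr d n)).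
Proof. intros [B [HB HR]].
  assert (HS : Sig11 (fun t : T3 => (forall i, fst (fst t) i = snd (fst t) i) \/ Img B t)).
  { eapply Sig11_ext. apply (Sig11_union (fun n => match n with 0 => (fun t : T3 => forall i, fst (fst t) i = snd (fst t) i) | _ => Img B end)).
    intros [|n]. apply closed3_Sig11. intros t Ht i. destruct (Ht (S i)) as [t' [H1 H2]].
    destruct (H1 i ltac:(lia)) as [-> [-> _]]. auto. apply Img_Delta; auto.
    intro t; split. intros [[|n] H]; auto. intros [H|H]; [exists 0|exists 1]; auto. }
  destruct (Sig11_tree _ HS) as [C [HC1 [HC2 HC3]]]. exists C. split; [|split]; auto.
  intros a b. rewrite <- HC3. unfold Rpp, Img. simpl. split.
  - intros [<-|[x [y [H1 [H2 H3]]]]]. exists (fun _ => 0); left; auto.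
    apply HR in H3. destruct H3 as [beta Hb]. exists beta. right. eauto.
  - intros [beta [H|[x [y [H1 [H2 H3]]]]]]. left; apply functional_extensionality; auto.
    right. exists x, y. split; [|split]; auto. apply HR; eauto. Qed.

Lemma Rpp_refl R a : Rpp R a a. Proof. left; auto. Qed.
Lemma Rpp_trans R : quasiorder R -> forall a b c, Rpp R a b -> Rpp R b c -> Rpp R a c.
Proof. intros [_ HT] a b c [<-|[x [y [H1 [H2 H3]]]]] [<-|[x' [y' [H1' [H2' H3']]]]]; unfold Rpp; eauto 7.
  right. exists x, y'. split; [|split]; auto. apply HT with y; auto.
  assert (y = x') by (apply e_inj; congruence). subst; auto. Qed.
Lemma Rpp_e R x y : R x y -> Rpp R (e x) (e y). Proof. intro; right; eauto. Qed.
Lemma Rpp_e_inv R x y : quasiorder R -> Rpp R (e x) (e y) -> R x y.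
Proof. intros [HR _] [H|[x' [y' [H1 [H2 H3]]]]].
  apply e_inj in H; subst; auto.
  apply e_inj in H1; apply e_inj in H2; subst; auto. Qed.
End Transfer.
Lemma list_bound {A} (L : list A) (P : A -> nat -> Prop) :
  (forall c m m', m <= m' -> P c m -> P c m') -> (forall c, In c L -> exists m, P c m) ->
  exists M, forall c, In c L -> P c M.
Proof. intros Hmon. induction L as [|a L IH]; intro H.
  - exists 0; intros c [].
  - destruct (H a (or_introl eq_refl)) as [m Hm]. destruct IH as [M HM]. intros c Hc; apply H; right; auto.
    exists (max m M). intros c [<-|Hc]. apply Hmon with m; auto; lia. apply Hmon with M; auto; lia. Qed.

Lemma konig {A} (d : A) (fin : nat -> list A) (Good : list A -> Prop)
  (Hpre : forall l m, Good l -> Good (firstn m l))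
  (Hfin : forall l c l', Good (l ++ c :: l') -> In c (fin (length l)))
  (Hex : forall n, exists l, length l = n /\ Good l) :
  exists f : nat -> A, forall n, Good (map f (seq 0 n)).
Proof.
  set (Ext := fun l => forall m, exists l', length l' = m /\ Good (l ++ l')).
  assert (Hstep : forall l, Ext l -> exists c, Ext (l ++ [c])).
  { intros l Hl. apply NNPP; intro Hn.
    set (P := fun c m => ~ exists l', length l' = m /\ Good ((l ++ [c]) ++ l')).
    destruct (list_bound (fin (length l)) P) as [M HM].
    - intros c m m' Hmm' HP [l' [H1 H2]]. apply HP. exists (firstn m l'). split.
      rewrite length_firstn; lia. replace ((l ++ [c]) ++ firstn m l') with (firstn (length (l ++ [c]) + m) ((l ++ [c]) ++ l')).
      apply Hpre; auto. apply firstn_app_2.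
    - intros c _. apply NNPP; intro Hc. apply Hn. exists c. intro m. apply NNPP; intro Hm. apply Hc. exists m. exact Hm.
    - destruct (Hl (S M)) as [[|c l''] [H1 H2]]. simpl in H1; lia.
      apply (HM c). eapply Hfin; eauto. exists l''. split. simpl in H1; lia. rewrite <- app_assoc; auto. }
  assert (Hnx : forall l, exists c, Ext l -> Ext (l ++ [c])).
  { intro l. destruct (classic (Ext l)) as [H|H]. destruct (Hstep l H) as [c Hc]; eauto. exists d; tauto. }
  destruct (choice_ _ Hnx) as [nx Hnxs].
  set (L := fix L n := match n with 0 => [] | S n => L n ++ [nx (L n)] end).
  assert (HL : forall n, Ext (L n)).
  { induction n. intro m. destruct (Hex m) as [l [H1 H2]]. exists l; auto. simpl. apply Hnxs; auto. }
  exists (fun n => nx (L n)). intro n.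
  assert (E : map (fun n => nx (L n)) (seq 0 n) = L n).
  { induction n; auto. rewrite seq_S, map_app, IHn. auto. }
  rewrite E. destruct (HL n 0) as [[|] [H1 H2]]. rewrite app_nil_r in H2; auto. simpl in H1; lia. Qed.

Lemma finite_pigeon K (Q : nat -> nat -> Prop) :
  (forall k n m, m <= n -> Q k n -> Q k m) -> (forall n, exists k, k <= K /\ Q k n) ->
  exists k, k <= K /\ forall n, Q k n.
Proof. intros Hmon Hall. apply NNPP; intro Hn.
  assert (Hb : forall K', K' <= K -> exists N, forall k, k <= K' -> ~ Q k N).
  { induction K' as [|K' IH]; intro HK.
    - assert (exists n, ~ Q 0 n) as [n Hn0]. { apply NNPP; intro H. apply Hn. exists 0. split. lia.
        intro n; apply NNPP; intro; apply H; eauto. }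
      exists n. intros k Hk; replace k with 0 by lia; auto.
    - destruct IH as [N HN]. lia.
      assert (exists n, ~ Q (S K') n) as [n Hn0]. { apply NNPP; intro H. apply Hn. exists (S K'). split. lia.
        intro n0; apply NNPP; intro; apply H; eauto. }
      exists (max N n). intros k Hk HQ. destruct (Nat.eq_dec k (S K')). subst. apply Hn0. apply Hmon with (max N n); auto; lia.
      apply (HN k). lia. apply Hmon with (max N n); auto; lia. }
  destruct (Hb K (le_n K)) as [N HN]. destruct (Hall N) as [k [Hk HQ]]. apply (HN k); auto. Qed.
Definition col := (list bool * list nat)%type.
Definition dcol : col := ([], []).
Definition colOK (k : nat) (c : col) (a b : bool) (m : nat) : Prop :=
  length (fst c) = S k /\ length (snd c) = k /\ nth 0 (fst c) false = a /\ nth k (fst c) false = b /\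
  forall j, j < k -> nth j (snd c) 0 <= m.
Definition rowL (j : nat) (l : list col) : list bool := map (fun c => nth j (fst c) false) l.
Definition wrowL (j : nat) (l : list col) : list nat := map (fun c => nth j (snd c) 0) l.

Lemma nth_map_lt {A B} (f : A -> B) l i d d' : i < length l -> nth i (map f l) d = f (nth i l d').
Proof. intro H. rewrite (nth_indep _ d (f d')) by (rewrite length_map; auto). apply map_nth. Qed.

Lemma rowL_firstn j m l : rowL j (firstn m l) = firstn m (rowL j l).
Proof. unfold rowL; rewrite firstn_map; auto. Qed.
Lemma wrowL_firstn j m l : wrowL j (firstn m l) = firstn m (wrowL j l).
Proof. unfold wrowL; rewrite firstn_map; auto. Qed.

Section Chain.
Variable C : list bool -> list bool -> list nat -> Prop.
Hypothesis HC1 : forall u v s m, C u v s -> C (firstn m u) (firstn m v) (firstn m s).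

Definition chainOK k (cols : list col) (u v : list bool) (s : list nat) : Prop :=
  length cols = length s /\
  (forall i, i < length s -> colOK k (nth i cols dcol) (nth i u false) (nth i v false) (nth i s 0)) /\
  (forall j, j < k -> C (rowL j cols) (rowL (S j) cols) (wrowL j cols)).

Definition Sch (u v : list bool) (s : list nat) : Prop :=
  length u = length s /\ length v = length s /\
  exists k, k <= nth 0 s 0 /\ exists cols, chainOK k cols u v s.

Lemma Sch_nil : Sch [] [] [].
Proof. split; [|split]; auto. exists 0; split; auto. exists []. split; [|split]; auto.
  intros i Hi; simpl in Hi; lia. intros; lia. Qed.

Lemma Sch_prefix u v s m : Sch u v s -> Sch (firstn m u) (firstn m v) (firstn m s).
Proof. intros [H1 [H2 [k [Hk [cols [H3 [H4 H5]]]]]]]. destruct m as [|m]. simpl; apply Sch_nil.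
  split; [|split]. rewrite !length_firstn; lia. rewrite !length_firstn; lia.
  exists k. split. rewrite nth_firstn. destruct (Nat.ltb_spec 0 (S m)); [auto|lia].
  exists (firstn (S m) cols). split; [|split].
  - rewrite !length_firstn; lia.
  - intros i Hi. rewrite length_firstn in Hi. rewrite !nth_firstn. destruct (Nat.ltb_spec i (S m)); [|lia].
    apply H4; lia.
  - intros j Hj. rewrite !rowL_firstn, wrowL_firstn. apply HC1; auto. Qed.

Lemma Sch_normal u v s t : Sch u v s -> le_seq s t -> Sch u v t.
Proof. intros [H1 [H2 [k [Hk [cols [H3 [H4 H5]]]]]]] [Hl Hst].
  split; [|split]; try lia. exists k. split.
  destruct s as [|a s]. simpl in Hk; lia. specialize (Hst 0 ltac:(simpl; lia)). lia.
  exists cols. split; [|split]; auto. lia.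
  intros i Hi. destruct (H4 i ltac:(lia)) as [A1 [A2 [A3 [A4 A5]]]]. split; [|split; [|split; [|split]]]; auto.
  intros j Hj. specialize (A5 j Hj). specialize (Hst i ltac:(lia)). lia. Qed.

Lemma Sch_refl u s : length u = length s -> Sch u u s.
Proof. intro H. split; [|split]; auto. exists 0. split. lia.
  exists (map (fun b => ([b], [])) u). split; [|split].
  - rewrite length_map; auto.
  - intros i Hi. rewrite (nth_map_lt _ _ _ _ false) by lia. split; [|split; [|split; [|split]]]; simpl; auto. intros; lia.
  - intros; lia. Qed.

Definition merge (c1 c2 : col) : col := (fst c1 ++ tl (fst c2), snd c1 ++ snd c2).

Lemma merge_nth k1 k2 (b1 b2 : list bool) j : length b1 = S k1 -> length b2 = S k2 ->
  nth k1 b1 false = nth 0 b2 false -> j <= k2 -> nth (k1 + j) (b1 ++ tl b2) false = nth j b2 false.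
Proof. intros H1 H2 H3 Hj. destruct j as [|j].
  - rewrite Nat.add_0_r, app_nth1 by lia. auto.
  - rewrite app_nth2 by lia. replace (k1 + S j - length b1) with j by lia.
    destruct b2 as [|x b2]; simpl in *; [lia|]. auto. Qed.

Lemma rowL_ext j j' (l1 : list col) g n : length l1 = n ->
  (forall i, i < n -> nth j (fst (g i)) false = nth j' (fst (nth i l1 dcol)) false) ->
  rowL j (map g (seq 0 n)) = rowL j' l1.
Proof. intros H1 H2. apply nth_ext with (d := false) (d' := false).
  unfold rowL; rewrite !length_map, length_seq; auto.
  intros i Hi. unfold rowL in *. rewrite length_map, length_map, length_seq in Hi.
  rewrite map_map. rewrite (nth_map_lt _ _ _ _ 0) by (rewrite length_seq; auto).
  rewrite (nth_map_lt _ _ _ _ dcol) by lia. rewrite seq_nth by auto. simpl. apply H2; auto. Qed.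
Lemma wrowL_ext j j' (l1 : list col) g n : length l1 = n ->
  (forall i, i < n -> nth j (snd (g i)) 0 = nth j' (snd (nth i l1 dcol)) 0) ->
  wrowL j (map g (seq 0 n)) = wrowL j' l1.
Proof. intros H1 H2. apply nth_ext with (d := 0) (d' := 0).
  unfold wrowL; rewrite !length_map, length_seq; auto.
  intros i Hi. unfold wrowL in *. rewrite length_map, length_map, length_seq in Hi.
  rewrite map_map. rewrite (nth_map_lt _ _ _ _ 0) by (rewrite length_seq; auto).
  rewrite (nth_map_lt _ _ _ _ dcol) by lia. rewrite seq_nth by auto. simpl. apply H2; auto. Qed.

Lemma Sch_add u v w s t : Sch u v s -> Sch v w t -> length s = length t ->
  Sch u w (add_restr s (fun i => nth i t 0)).
Proof. intros [H1 [H2 [k1 [Hk1 [c1 [H3 [H4 H5]]]]]]] [H1' [H2' [k2 [Hk2 [c2 [H3' [H4' H5']]]]]]] Hst.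
  unfold Sch. rewrite length_add_restr. set (n := length s).
  split; [|split]; try lia. exists (k1 + k2). split.
  { destruct s as [|a s]. simpl in Hk1. destruct t as [|b t]; [|simpl in Hst; lia]. simpl in Hk2; simpl; lia.
    rewrite nth_add_restr by (simpl; lia). lia. }
  exists (map (fun i => merge (nth i c1 dcol) (nth i c2 dcol)) (seq 0 n)).
  assert (Hok : forall i, i < n -> colOK (k1 + k2) (merge (nth i c1 dcol) (nth i c2 dcol)) (nth i u false) (nth i w false)
     (nth i s 0 + nth i t 0)).
  { intros i Hi. destruct (H4 i Hi) as [A1 [A2 [A3 [A4 A5]]]]. destruct (H4' i ltac:(lia)) as [B1 [B2 [B3 [B4 B5]]]].
    unfold colOK, merge; cbn [fst snd]. split; [|split; [|split; [|split]]].
    - rewrite length_app, A1. destruct (fst (nth i c2 dcol)); simpl in *; lia.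
    - rewrite length_app; lia.
    - rewrite app_nth1 by lia. auto.
    - rewrite merge_nth with (k2 := k2) by (auto; congruence). auto.
    - intros j Hj. destruct (Nat.ltb_spec j k1). rewrite app_nth1 by lia. specialize (A5 j H); lia.
      rewrite app_nth2 by lia. specialize (B5 (j - length (snd (nth i c1 dcol))) ltac:(lia)). lia. }
  split; [|split].
  - rewrite length_map, length_seq, length_add_restr; auto.
  - intros i Hi. rewrite length_add_restr in Hi. rewrite (nth_map_lt _ _ _ _ 0) by (rewrite length_seq; auto).
    rewrite seq_nth by auto. rewrite nth_add_restr by auto. apply Hok; auto.
  - intros j Hj. destruct (Nat.ltb_spec j k1).
    + rewrite (rowL_ext j j c1), (rowL_ext (S j) (S j) c1), (wrowL_ext j j c1); auto.
      * intros i Hi. unfold merge; simpl. destruct (Hok i Hi) as [A1 _]. destruct (H4 i Hi) as [B1 [B2 _]].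
        rewrite app_nth1; auto. lia.
      * intros i Hi. unfold merge; simpl. destruct (H4 i Hi) as [B1 [B2 _]]. rewrite app_nth1; auto. lia.
      * intros i Hi. unfold merge; simpl. destruct (H4 i Hi) as [B1 [B2 _]]. rewrite app_nth1; auto. lia.
    + replace j with (k1 + (j - k1)) by lia. replace (S (k1 + (j - k1))) with (k1 + S (j - k1)) by lia.
      rewrite (rowL_ext _ (j - k1) c2), (rowL_ext _ (S (j - k1)) c2), (wrowL_ext _ (j - k1) c2); try lia.
      * apply H5'; lia.
      * intros i Hi. unfold merge; simpl. destruct (H4 i Hi) as [B1 [B2 _]]. rewrite app_nth2 by lia.
        f_equal. lia.
      * intros i Hi. unfold merge; simpl. destruct (H4 i Hi) as [B1 [B2 [B3 [B4 _]]]]. destruct (H4' i ltac:(lia)) as [D1 [D2 [D3 [D4 _]]]].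
        apply merge_nth with (k2 := k2); auto. congruence. lia.
      * intros i Hi. unfold merge; simpl. destruct (H4 i Hi) as [B1 [B2 [B3 [B4 _]]]]. destruct (H4' i ltac:(lia)) as [D1 [D2 [D3 [D4 _]]]].
        apply merge_nth with (k2 := k2); auto. congruence. lia. Qed.
End Chain.
Fixpoint allbits (n : nat) : list (list bool) :=
  match n with 0 => [[]] | S n => flat_map (fun l => [true :: l; false :: l]) (allbits n) end.
Lemma allbits_in l : In l (allbits (length l)).
Proof. induction l as [|b l IH]; simpl; auto. apply in_flat_map. exists l; split; auto. destruct b; simpl; auto. Qed.
Fixpoint allnats (n B : nat) : list (list nat) :=
  match n with 0 => [[]] | S n => flat_map (fun l => map (fun k => k :: l) (seq 0 (S B))) (allnats n B) end.
Lemma allnats_in B l : (forall j, j < length l -> nth j l 0 <= B) -> In l (allnats (length l) B).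
Proof. induction l as [|a l IH]; intro H; cbn [length allnats]; [left; auto|]. apply in_flat_map. exists l; split.
  apply IH. intros j Hj. apply (H (S j)); simpl; lia.
  apply in_map_iff. exists a; split; auto. apply in_seq. specialize (H 0 ltac:(simpl; lia)). simpl in H; lia. Qed.

Section ChainBranch.
Variable C : list bool -> list bool -> list nat -> Prop.
Hypothesis HC1 : forall u v s m, C u v s -> C (firstn m u) (firstn m v) (firstn m s).

Lemma Sch_branch x y beta : (forall n, Sch C (restr x n) (restr y n) (restr beta n)) ->
  exists k (zs : nat -> nat -> bool) (gs : nat -> nat -> nat), zs 0 = x /\ zs k = y /\
   forall j, j < k -> forall n, C (restr (zs j) n) (restr (zs (S j)) n) (restr (gs j) n).
Proof. intro HS.
  set (Good := fun k (l : list col) => (forall i, i < length l -> colOK k (nth i l dcol) (x i) (y i) (beta i)) /\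
     forall j, j < k -> C (rowL j l) (rowL (S j) l) (wrowL j l)).
  assert (Hpre : forall k l m, Good k l -> Good k (firstn m l)).
  { intros k l m [G1 G2]. split.
    - intros i Hi. rewrite length_firstn in Hi. rewrite nth_firstn. destruct (Nat.ltb_spec i m); [|lia]. apply G1; lia.
    - intros j Hj. rewrite !rowL_firstn, wrowL_firstn. apply HC1; auto. }
  destruct (finite_pigeon (beta 0) (fun k n => exists l, length l = n /\ Good k l)) as [k [Hk Hall]].
  { intros k n m Hmn [l [H1 H2]]. exists (firstn m l). split. rewrite length_firstn; lia. apply Hpre; auto. }
  { intro n. destruct (HS n) as [_ [_ [k [Hk [cols [H1 [H2 H3]]]]]]]. exists k. split.
    destruct n. simpl in Hk; lia. rewrite nth_restr in Hk; lia.
    exists cols. rewrite length_restr in H1. split; auto. split; auto.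
    intros i Hi. specialize (H2 i ltac:(rewrite length_restr; lia)). rewrite !nth_restr in H2 by lia. auto. }
  destruct (konig dcol (fun i => list_prod (allbits (S k)) (allnats k (beta i))) (Good k)) as [f Hf].
  - intros; apply Hpre; auto.
  - intros l c l' [G1 _]. specialize (G1 (length l) ltac:(rewrite length_app; simpl; lia)).
    rewrite nth_middle in G1. destruct G1 as [A1 [A2 [A3 [A4 A5]]]]. destruct c as [b w]. cbn [fst snd] in *.
    apply in_prod. rewrite <- A1; apply allbits_in. rewrite <- A2; apply allnats_in. intros; rewrite A2 in *; auto.
  - intro n; apply Hall.
  - exists k, (fun j i => nth j (fst (f i)) false), (fun j i => nth j (snd (f i)) 0).
    assert (Hc : forall i, colOK k (f i) (x i) (y i) (beta i)).
    { intro i. destruct (Hf (S i)) as [G1 _]. specialize (G1 i ltac:(rewrite length_map, length_seq; lia)).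
      rewrite (nth_map_lt _ _ _ _ 0) in G1 by (rewrite length_seq; lia). rewrite seq_nth in G1 by lia. auto. }
    split; [|split].
    + apply functional_extensionality; intro i. apply (Hc i).
    + apply functional_extensionality; intro i. apply (Hc i).
    + intros j Hj n. destruct (Hf n) as [_ G2]. specialize (G2 j Hj). unfold rowL, wrowL, restr in *.
      rewrite !map_map in G2. auto. Qed.
End ChainBranch.
Definition pmap {A} (d : A) (l : list A) (k : nat) : list A := map (fun i => nth (2*i+1) l d) (seq 0 k).
Lemma length_pmap {A} (d : A) l k : length (pmap d l k) = k.
Proof. unfold pmap; rewrite length_map, length_seq; auto. Qed.
Lemma nth_pmap {A} (d : A) l k i : i < k -> nth i (pmap d l k) d = nth (2*i+1) l d.
Proof. intro H. unfold pmap. rewrite (nth_map_lt _ _ _ _ 0) by (rewrite length_seq; auto). rewrite seq_nth; auto. Qed.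
Lemma pmap_S {A} (d : A) l k : pmap d l (S k) = pmap d l k ++ [nth (2*k+1) l d].
Proof. unfold pmap; rewrite seq_S, map_app; auto. Qed.
Lemma firstn_pmap {A} (d : A) l k m : firstn m (pmap d l k) = pmap d l (min m k).
Proof. apply nth_ext with (d := d) (d' := d). rewrite length_firstn, !length_pmap; auto.
  intros i Hi. rewrite length_firstn, length_pmap in Hi. rewrite nth_firstn.
  destruct (Nat.ltb_spec i m); [|lia]. rewrite !nth_pmap; auto; lia. Qed.
Lemma pmap_ext {A} (d : A) l l' k : (forall i, i < k -> nth (2*i+1) l d = nth (2*i+1) l' d) -> pmap d l k = pmap d l' k.
Proof. intro H. unfold pmap. apply map_ext_in. intros i Hi; apply in_seq in Hi; apply H; lia. Qed.
Lemma pmap_app {A} (d : A) l l' k : 2*k <= length l -> pmap d (l ++ l') k = pmap d l k.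
Proof. intro H. apply pmap_ext. intros i Hi. rewrite app_nth1; auto; lia. Qed.
Lemma pmap_firstn {A} (d : A) l k m : 2*k <= m -> pmap d (firstn m l) k = pmap d l k.
Proof. intro H. apply pmap_ext. intros i Hi. rewrite nth_firstn. destruct (Nat.ltb_spec (2*i+1) m); auto; lia. Qed.
Lemma pmap_restr {A} (d : A) f n k : 2*k <= n -> pmap d (restr f n) k = restr (fun i => f (2*i+1)) k.
Proof. intro H. unfold pmap. transitivity (map (fun i => f (2*i+1)) (seq 0 k)); [|reflexivity].
  apply map_ext_in. intros i Hi; apply in_seq in Hi. rewrite nth_restr; auto. lia. Qed.
Lemma half_cases n : exists h, n = 2*h \/ n = 2*h+1.
Proof. exists (Nat.div2 n). pose proof (Nat.div2_odd n). destruct (Nat.odd n); simpl in H; lia. Qed.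
Lemma div2_2h h : Nat.div2 (2*h) = h. Proof. apply Nat.div2_double. Qed.
Lemma div2_2h1 h : Nat.div2 (2*h+1) = h. Proof. apply Nat.div2_odd'. Qed.
Lemma odd_2h h : Nat.odd (2*h) = false. Proof. apply Nat.odd_even. Qed.
Lemma odd_2h1 h : Nat.odd (2*h+1) = true. Proof. apply Nat.odd_odd. Qed.
Lemma firstn_app_exact {A} (l l' : list A) : firstn (length l) (l ++ l') = l.
Proof. rewrite <- (Nat.add_0_r (length l)), firstn_app_2. simpl; apply app_nil_r. Qed.
Lemma pmap_add_restr s a a' k : 2*k <= length s -> (forall i, a' (2*i+1) = a i) ->
  pmap 0 (add_restr s a') k = add_restr (pmap 0 s k) a.
Proof. intros H1 H2. symmetry; apply add_restr_nth_eq. rewrite !length_pmap; auto.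
  intros i Hi. rewrite length_pmap in Hi. rewrite !nth_pmap by auto. rewrite nth_add_restr by lia. rewrite H2; auto. Qed.
Lemma le_seq_pmap s t k : le_seq s t -> 2*k <= length s -> le_seq (pmap 0 s k) (pmap 0 t k).
Proof. intros [H1 H2] Hk. split. rewrite !length_pmap; auto. intros i Hi. rewrite length_pmap in Hi.
  rewrite !nth_pmap by auto. apply H2; lia. Qed.
Lemma le_seq_snoc s t a : le_seq s t -> le_seq (s ++ [a]) (t ++ [a]).
Proof. intros [H1 H2]. split. rewrite !length_app; simpl; lia. intros i Hi. rewrite length_app in Hi; simpl in Hi.
  destruct (Nat.ltb_spec i (length s)). rewrite !app_nth1 by lia. auto.
  rewrite !app_nth2 by lia. replace (i - length t) with (i - length s) by lia. auto. Qed.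
Lemma add_restr_snoc s t a : add_restr (s ++ [t]) a = add_restr s a ++ [t + a (length s)].
Proof. apply add_restr_nth_eq. rewrite !length_app, length_add_restr; auto.
  intros i Hi. rewrite length_app in Hi; simpl in Hi. destruct (Nat.ltb_spec i (length s)).
  rewrite !app_nth1 by (try rewrite length_add_restr; lia). apply nth_add_restr; auto.
  replace i with (length s) by lia. rewrite !nth_middle. rewrite <- (length_add_restr s a) at 1. rewrite nth_middle. auto. Qed.
Lemma two_div2_le n : 2 * Nat.div2 n <= n.
Proof. destruct (half_cases n) as [h [-> | ->]]; [rewrite div2_2h|rewrite div2_2h1]; lia. Qed.

Definition cx (x : nat -> bool) (p : nat) : bool := if Nat.even p then false else x (Nat.div2 p).
Lemma cx_ev x i : cx x (2*i) = false. Proof. unfold cx. rewrite Nat.even_even; auto. Qed.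
Lemma cx_od x i : cx x (2*i+1) = x i. Proof. unfold cx. rewrite Nat.even_odd, div2_2h1; auto. Qed.
Definition sh (a : nat -> nat) (p : nat) : nat := if Nat.even p then 0 else a (Nat.div2 p).
Lemma sh_od a i : sh a (2*i+1) = a i. Proof. unfold sh. rewrite Nat.even_odd, div2_2h1; auto. Qed.

Section Trees.
Variable C : list bool -> list bool -> list nat -> Prop.
Hypothesis HC1 : forall u v s m, C u v s -> C (firstn m u) (firstn m v) (firstn m s).
Variable R2 : (nat -> bool) -> (nat -> bool) -> Prop.
Hypothesis HRc : forall a b, R2 a b <-> exists d, forall n, C (restr a n) (restr b n) (restr d n).
Hypothesis HRr : forall a, R2 a a.
Hypothesis HRt : forall a b c, R2 a b -> R2 b c -> R2 a c.

Definition Sx (x : nat -> bool) (u : list bool) (s : list nat) : Prop := Sch C u (restr x (length u)) s.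

Lemma Sx_len x u s : Sx x u s -> length u = length s.
Proof. intros [H _]; auto. Qed.
Lemma Sx_prefix x u s m : Sx x u s -> Sx x (firstn m u) (firstn m s).
Proof. intro H. unfold Sx. apply (Sch_prefix C HC1) with (m := m) in H. rewrite firstn_restr in H.
  rewrite length_firstn. auto. Qed.
Lemma Sx_normal x u s t : Sx x u s -> le_seq s t -> Sx x u t.
Proof. apply Sch_normal. Qed.
Lemma Sx_refl x n s : length s = n -> Sx x (restr x n) s.
Proof. intro H. unfold Sx. rewrite length_restr. apply Sch_refl. rewrite length_restr; auto. Qed.

Lemma Sx_branch y z b : (forall n, Sx y (restr z n) (restr b n)) -> R2 z y.
Proof. intro H. assert (H' : forall n, Sch C (restr z n) (restr y n) (restr b n)).
  { intro n. specialize (H n). unfold Sx in H. rewrite length_restr in H. auto. }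
  destruct (Sch_branch C HC1 z y b H') as [k [zs [gs [H0 [Hk HC]]]]].
  assert (forall j, j <= k -> R2 z (zs j)).
  { induction j; intro Hj. rewrite H0; auto. apply HRt with (zs j). apply IHj; lia.
    apply HRc. exists (gs j). apply HC; lia. }
  rewrite <- Hk. auto. Qed.

Lemma Sx_shift x y : R2 x y -> exists a, forall u s, Sx x u s -> Sx y u (add_restr s a).
Proof. intro H. apply HRc in H. destruct H as [d Hd]. exists (fun i => d i + 1).
  assert (Hxy : forall n, Sch C (restr x n) (restr y n) (restr (fun i => d i + 1) n)).
  { intro n. destruct n as [|n]. apply Sch_nil.
    split; [|split]; try (rewrite !length_restr; auto). exists 1. split. rewrite nth_restr; lia.
    exists (map (fun i => ([x i; y i], [d i])) (seq 0 (S n))). split; [|split].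
    - rewrite length_map, length_seq, length_restr; auto.
    - intros i Hi. rewrite length_restr in Hi. rewrite (nth_map_lt _ _ _ _ 0) by (rewrite length_seq; auto).
      rewrite seq_nth by auto. rewrite !nth_restr by auto. unfold colOK; simpl. split; [|split; [|split; [|split]]]; auto.
      intros j Hj. destruct j; [lia|lia].
    - intros j Hj. replace j with 0 by lia. unfold rowL, wrowL. rewrite !map_map. simpl. apply (Hd (S n)). }
  intros u s Hs. unfold Sx in *. pose proof (Sx_len _ _ _ Hs) as Hl.
  pose proof (Sch_add C u _ _ s _ Hs (Hxy (length u)) ltac:(rewrite length_restr; auto)) as H.
  rewrite (add_restr_ext s _ (fun i => d i + 1)) in H; auto.
  intros i Hi. rewrite nth_restr; auto. lia. Qed.

Definition Tcond (x : nat -> bool) (v : list bool) (s : list nat) : Prop :=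
  length v = length s /\
  ( ((forall i, 2*i < length v -> nth (2*i) v false = false) /\
     Sx x (pmap false v (Nat.div2 (length v))) (pmap 0 s (Nat.div2 (length v))) /\
     (Nat.odd (length v) = true -> exists b t, Sx x (pmap false v (Nat.div2 (length v)) ++ [b]) (pmap 0 s (Nat.div2 (length v)) ++ [t])))
  \/ (exists j, 2*j < length v /\ nth (2*j) v false = true /\ (forall i, i < j -> nth (2*i) v false = false) /\
        Sx x (pmap false v j) (pmap 0 s j)) ).

Lemma Tcond_nil x : Tcond x [] [].
Proof. split; auto. left. split; [|split].
  - intros i Hi; simpl in Hi; lia.
  - simpl. unfold pmap; simpl. apply Sch_nil.
  - simpl; discriminate. Qed.

Lemma Real_from x v s k0 m : length v = length s -> 2*k0 <= length v ->
  (forall i, i < k0 -> nth (2*i) v false = false) -> Sx x (pmap false v k0) (pmap 0 s k0) -> m <= 2*k0 ->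
  Tcond x (firstn m v) (firstn m s).
Proof. intros H1 H2 H3 H4 H5. unfold Tcond. rewrite !firstn_length_le by lia. split; auto. left.
  split; [|split].
  - intros i Hi. rewrite nth_firstn. destruct (Nat.ltb_spec (2*i) m); [|lia]. apply H3; lia.
  - destruct (half_cases m) as [h [-> | ->]]; [rewrite div2_2h|rewrite div2_2h1];
    rewrite !pmap_firstn by lia; replace h with (min h k0) by lia; rewrite <- !firstn_pmap; apply Sx_prefix; auto.
  - destruct (half_cases m) as [h [-> | ->]]; [rewrite odd_2h; discriminate|]. intros _. rewrite div2_2h1.
    exists (nth (2*h+1) v false), (nth (2*h+1) s 0). rewrite !pmap_firstn by lia. rewrite <- !pmap_S.
    replace (S h) with (min (S h) k0) by lia. rewrite <- !firstn_pmap. apply Sx_prefix; auto. Qed.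

Lemma Tcond_prefix x v s m : Tcond x v s -> Tcond x (firstn m v) (firstn m s).
Proof. intros [Hl H]. destruct (Nat.le_gt_cases (length v) m) as [Hm|Hm].
  { rewrite !firstn_all2 by lia. split; auto. }
  destruct H as [[H1 [H2 H3]]|[j [J1 [J2 [J3 J4]]]]].
  - apply Real_from with (k0 := Nat.div2 (length v)); auto. apply two_div2_le.
    intros i Hi. apply H1. pose proof (two_div2_le (length v)); lia.
    destruct (half_cases (length v)) as [h [E|E]]; rewrite E in *; [rewrite div2_2h|rewrite div2_2h1]; lia.
  - destruct (Nat.le_gt_cases m (2*j)).
    + apply Real_from with (k0 := j); auto; lia.
    + unfold Tcond. rewrite !firstn_length_le by lia. split; auto. right. exists j.
      split; [lia|split; [|split]].
      * rewrite nth_firstn. destruct (Nat.ltb_spec (2*j) m); [auto|lia].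
      * intros i Hi. rewrite nth_firstn. destruct (Nat.ltb_spec (2*i) m); [auto|lia].
      * rewrite !pmap_firstn by lia. auto. Qed.

Lemma Tcond_normal x v s t : Tcond x v s -> le_seq s t -> Tcond x v t.
Proof. intros [Hl H] Hst. pose proof Hst as [Hst1 _]. split; [lia|].
  destruct H as [[H1 [H2 H3]]|[j [J1 [J2 [J3 J4]]]]].
  - left. split; [|split]; auto.
    + eapply Sx_normal; eauto. apply le_seq_pmap; auto. pose proof (two_div2_le (length v)); lia.
    + intro Ho. destruct (H3 Ho) as [b [t0 Hb]]. exists b, t0. eapply Sx_normal; eauto.
      apply le_seq_snoc, le_seq_pmap; auto. pose proof (two_div2_le (length v)); lia.
  - right. exists j. split; [|split; [|split]]; auto. eapply Sx_normal; eauto. apply le_seq_pmap; auto; lia. Qed.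

Lemma Tcond_pruned x v s : Tcond x v s -> exists v' s', Tcond x v' s' /\ length v < length v' /\
  firstn (length v) v' = v /\ firstn (length s) s' = s.
Proof. intros [Hl H]. destruct H as [[H1 [H2 H3]]|[j [J1 [J2 [J3 J4]]]]].
  - destruct (half_cases (length v)) as [h [E|E]].
    + exists (v ++ [true]), (s ++ [0]). split; [|split; [|split]].
      * split. rewrite !length_app; simpl; lia. right. exists h. rewrite length_app; cbn [length].
        split; [lia|split; [|split]].
        -- rewrite app_nth2 by lia. replace (2*h - length v) with 0 by lia. auto.
        -- intros i Hi. rewrite app_nth1 by lia. apply H1; lia.
        -- rewrite !pmap_app by lia. rewrite E, div2_2h in H2. auto.
      * rewrite length_app; simpl; lia.
      * apply firstn_app_exact.
      * apply firstn_app_exact.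
    + rewrite E in H3. rewrite odd_2h1 in H3. destruct (H3 eq_refl) as [b [t Hb]].
      exists (v ++ [b]), (s ++ [t]). split; [|split; [|split]].
      * split. rewrite !length_app; simpl; lia. left. rewrite length_app; cbn [length].
        replace (length v + 1) with (2*(S h)) by lia. rewrite div2_2h. split; [|split].
        -- intros i Hi. rewrite app_nth1 by lia. apply H1; lia.
        -- rewrite !pmap_S, !pmap_app by lia. rewrite div2_2h1 in Hb.
           rewrite app_nth2 by lia. rewrite app_nth2 by lia. replace (2*h+1 - length v) with 0 by lia.
           replace (2*h+1 - length s) with 0 by lia. simpl. auto.
        -- rewrite odd_2h; discriminate.
      * rewrite length_app; simpl; lia.
      * apply firstn_app_exact.
      * apply firstn_app_exact.
  - exists (v ++ [false]), (s ++ [0]). split; [|split; [|split]].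
    + split. rewrite !length_app; simpl; lia. right. exists j. rewrite length_app; cbn [length].
      split; [lia|split; [|split]].
      * rewrite app_nth1 by lia. auto.
      * intros i Hi. rewrite app_nth1 by lia. auto.
      * rewrite !pmap_app by lia. auto.
    + rewrite length_app; simpl; lia.
    + apply firstn_app_exact.
    + apply firstn_app_exact. Qed.

Lemma Tcond_code x n : Tcond x (restr (cx x) n) (restr (fun _ => 0) n).
Proof. split. rewrite !length_restr; auto. left. rewrite length_restr. split; [|split].
  - intros i Hi. rewrite nth_restr by auto. apply cx_ev.
  - destruct (half_cases n) as [h [E|E]]; rewrite E; [rewrite div2_2h|rewrite div2_2h1];
    rewrite !pmap_restr by lia; rewrite (restr_ext _ x) by (intros; apply cx_od); apply Sx_refl; apply length_restr.
  - destruct (half_cases n) as [h [E|E]]; rewrite E; [rewrite odd_2h; discriminate|]. intros _. rewrite div2_2h1.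
    exists (x h), 0. rewrite !pmap_restr by lia. rewrite (restr_ext _ x) by (intros; apply cx_od).
    rewrite <- !restr_S. apply Sx_refl. apply length_restr. Qed.

Lemma Tcond_decode y z b : (forall n, Tcond y (restr (cx z) n) (restr b n)) ->
  forall h, Sx y (restr z h) (restr (fun i => b (2*i+1)) h).
Proof. intros H h. destruct (H (2*h)) as [_ [[_ [H2 _]]|[j [J1 [J2 _]]]]].
  - rewrite length_restr, div2_2h in H2. rewrite !pmap_restr in H2 by lia.
    rewrite (restr_ext _ z) in H2 by (intros; apply cx_od). auto.
  - rewrite length_restr in J1. rewrite nth_restr in J2 by auto. rewrite cx_ev in J2. discriminate. Qed.

Lemma Tcond_shift x y a : (forall u s, Sx x u s -> Sx y u (add_restr s a)) ->
  forall v s, Tcond x v s -> Tcond y v (add_restr s (sh a)).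
Proof. intros Ha v s [Hl H]. split. rewrite length_add_restr; auto.
  destruct H as [[H1 [H2 H3]]|[j [J1 [J2 [J3 J4]]]]].
  - left. split; [|split]; auto.
    + rewrite pmap_add_restr with (a := a). apply Ha; auto. pose proof (two_div2_le (length v)); lia. apply sh_od.
    + intro Ho. destruct (H3 Ho) as [b [t Hb]]. exists b, (t + a (Nat.div2 (length v))).
      rewrite pmap_add_restr with (a := a). apply Ha in Hb. rewrite add_restr_snoc, length_pmap in Hb. auto.
      pose proof (two_div2_le (length v)); lia. apply sh_od.
  - right. exists j. split; [|split; [|split]]; auto. rewrite pmap_add_restr with (a := a). apply Ha; auto. lia. apply sh_od. Qed.
End Trees.
(* ---------- the trees T_x and part (1) ---------- *)
Definition bt (P : Prop) : bool := if excluded_middle_informative P then true else false.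
Lemma bt_true P : bt P = true <-> P.
Proof. unfold bt. destruct (excluded_middle_informative P); split; auto; discriminate. Qed.

Lemma bt_false P : bt P = false <-> ~ P.
Proof. unfold bt. destruct (excluded_middle_informative P); split; auto; try discriminate; tauto. Qed.
Lemma Cantor_sa : sigma_algebra (meas Cantor). Proof. apply generated_sa. Qed.
Lemma Cantor_cyl n b : meas Cantor (fun a : nat -> bool => a n = b).
Proof. apply generated_gen. exists n, b. intro; tauto. Qed.
Lemma Cantor_restr n l : meas Cantor (fun a : nat -> bool => restr a n = l).
Proof. eapply M_ext.
  apply (sa_and _ Cantor_sa (fun _ => length l = n) (fun a => forall i, i < n -> a i = nth i l false)).
  apply sa_const, Cantor_sa. apply (sa_all _ Cantor_sa nat countable_nat). intro i.
  apply (sa_impl _ Cantor_sa (fun _ => i < n)). apply sa_const, Cantor_sa. apply Cantor_cyl.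
  intro a. rewrite (restr_eq_nth a n l false). tauto. Qed.

Definition Ttree (C : list bool -> list bool -> list nat -> Prop) (x : nat -> bool) : Tree :=
  fun p => bt (Tcond C x (fst p) (snd p)).

Section Part1.
Variable C : list bool -> list bool -> list nat -> Prop.
Hypothesis HC1 : forall u v s m, C u v s -> C (firstn m u) (firstn m v) (firstn m s).

Lemma Sx_meas u s : meas Cantor (fun a => Sx C a u s).
Proof. eapply M_ext. apply (sa_ex _ Cantor_sa (list bool) cnt_lb
    (fun l a => restr a (length u) = l /\ Sch C u l s)). intro l.
  apply (sa_and _ Cantor_sa). apply Cantor_restr. apply sa_const, Cantor_sa.
  intro a; unfold Sx; split. intros [l [<- H]]; auto. intro H; eauto. Qed.

Lemma Tcond_meas v s : meas Cantor (fun a => Tcond C a v s).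
Proof. pose proof Cantor_sa as HS. unfold Tcond. apply (sa_and _ HS (fun _ => _)). apply sa_const; auto.
  apply (sa_or _ HS).
  - apply (sa_and _ HS (fun _ => _)). apply sa_const; auto. apply (sa_and _ HS). apply Sx_meas.
    apply (sa_impl _ HS (fun _ => _)). apply sa_const; auto.
    apply (sa_ex _ HS bool countable_bool). intro b. apply (sa_ex _ HS nat countable_nat). intro t. apply Sx_meas.
  - apply (sa_ex _ HS nat countable_nat). intro j. apply (sa_and _ HS (fun _ => _)). apply sa_const; auto.
    apply (sa_and _ HS (fun _ => _)). apply sa_const; auto. apply (sa_and _ HS (fun _ => _)). apply sa_const; auto.
    apply Sx_meas. Qed.

Lemma Ttree_meas (B : Tree -> Prop) : meas TreeSpace B -> meas Cantor (fun a => B (Ttree C a)).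
Proof. intro HB. apply (HB (fun B => meas Cantor (fun a => B (Ttree C a)))).
  apply (sa_preimage _ (Ttree C) Cantor_sa).
  intros Bg [p [b Hb]]. eapply M_ext. apply (sa_iff _ Cantor_sa (fun a => Tcond C a (fst p) (snd p)) (fun _ => b = true)).
  apply Tcond_meas. apply sa_const, Cantor_sa.
  intro a. rewrite Hb. unfold Ttree. destruct b.
  - rewrite bt_true. intuition.
  - rewrite bt_false. assert (false <> true) by discriminate. tauto. Qed.

Lemma Ttree_iff x v s : Ttree C x (v, s) = true <-> Tcond C x v s.
Proof. unfold Ttree. simpl. apply bt_true. Qed.

Lemma Ttree_pr x : Tpr_pred (Ttree C x).
Proof. split; [|split].
  - split; [|split; [|split]].
    + apply Ttree_iff. apply Tcond_nil.
    + intros u s H. apply Ttree_iff in H. apply H.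
    + intros u s n H. apply Ttree_iff in H. apply Ttree_iff. apply (Tcond_prefix C HC1); auto.
    + intros u s t H Hst. apply Ttree_iff in H. apply Ttree_iff. eapply Tcond_normal; eauto.
  - intros u s H. apply Ttree_iff in H. destruct (Tcond_pruned C _ _ _ H) as [v' [s' [H1 H2]]].
    exists v', s'. split; auto. apply Ttree_iff; auto.
  - exists ([], []). apply Ttree_iff. apply Tcond_nil. Qed.

Variable R2 : (nat -> bool) -> (nat -> bool) -> Prop.
Hypothesis HRc : forall a b, R2 a b <-> exists d, forall n, C (restr a n) (restr b n) (restr d n).
Hypothesis HRr : forall a, R2 a a.
Hypothesis HRt : forall a b c, R2 a b -> R2 b c -> R2 a c.

Lemma Ttree_self x : A_of (Ttree C x) (cx x).
Proof. exists (fun _ => 0). intro n. apply Ttree_iff. apply Tcond_code. Qed.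
Lemma Ttree_A y z : A_of (Ttree C y) (cx z) -> R2 z y.
Proof. intros [b Hb]. apply (Sx_branch C HC1 R2 HRc HRr HRt y z (fun i => b (2*i+1))).
  apply Tcond_decode. intro n. apply Ttree_iff, Hb. Qed.
Lemma Ttree_le x y : R2 x y -> le_S11 (Ttree C x) (Ttree C y).
Proof. intro H. destruct (Sx_shift C R2 HRc x y H) as [a Ha]. exists (sh a).
  intros u s Hs. apply Ttree_iff in Hs. apply Ttree_iff. apply (Tcond_shift C x y a Ha); auto. Qed.
End Part1.

Lemma le_subset S T : le_S11 S T -> forall alpha, A_of S alpha -> A_of T alpha.
Proof. intros [a Ha] alpha [b Hb]. exists (fun i => b i + a i). intro n.
  specialize (Ha _ _ (Hb n)). rewrite add_restr_restr in Ha. auto. Qed.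

Lemma part1_qo (X : MSpace) (R : X -> X -> Prop) : C_qo X R ->
  borel_hom X Tpr R (fun x y => ~ R x y) le_pr nsubset_pr.
Proof. intros [[e [Hinj [Hmeas [Hran Himg]]]] [Han Hqo]].
  destruct (Rpp_tree X e Hinj Hran Himg R Han) as [C [HC1 [_ HC3]]].
  pose (R2 := Rpp X e R).
  assert (HRr : forall a, R2 a a) by apply Rpp_refl.
  assert (HRt : forall a b c, R2 a b -> R2 b c -> R2 a c) by (apply Rpp_trans; auto).
  exists (fun x => exist Tpr_pred (Ttree C (e x)) (Ttree_pr C HC1 (e x))). split; [|split].
  - intros B [B' [HB' Hiff]]. eapply M_ext. apply Hmeas. apply (Ttree_meas C B' HB').
    intro x. simpl. rewrite Hiff. simpl. tauto.
  - intros x y H. unfold le_pr. simpl. apply (Ttree_le C R2 HC3). apply Rpp_e; auto.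
  - intros x y H. unfold nsubset_pr, nsubset_S11. simpl. intro Hs.
    apply H. apply (Rpp_e_inv X e Hinj); auto. apply (Ttree_A C HC1 R2 HC3 HRr HRt).
    apply Hs. apply Ttree_self. Qed.

Lemma part1_eq (X : MSpace) (R : X -> X -> Prop) : C_eq X R ->
  borel_hom X Tpr R (fun x y => ~ R x y) equiv_pr neq_pr.
Proof. intros [Hsb [Han [Hr [Hs Ht]]]].
  destruct (part1_qo X R) as [f [Hf [H1 H2]]]. split; [|split]; auto. split; eauto.
  exists f. split; [|split]; auto.
  - intros x y H. split; apply H1; auto.
  - intros x y H Heq. apply (H2 x y H). intros alpha Ha. apply Heq; auto. Qed.
(* ---------- part (2): the pair on T_pr reduces to an analytic qo / eq ---------- *)
Definition kc : list bool * list nat -> nat := proj1_sig (constructive_indefinite_description _ cnt_key).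
Lemma kc_inj p q : kc p = kc q -> p = q.
Proof. apply (proj2_sig (constructive_indefinite_description _ cnt_key)). Qed.
Definition kdec (n : nat) : list bool * list nat :=
  match excluded_middle_informative (exists p, kc p = n) with
  | left H => proj1_sig (constructive_indefinite_description _ H)
  | right _ => ([], []) end.
Lemma kdec_kc p : kdec (kc p) = p.
Proof. unfold kdec. destruct (excluded_middle_informative _) as [H|H].
  apply kc_inj. apply (proj2_sig (constructive_indefinite_description _ H)). exfalso; eauto. Qed.
Definition Dec (a : nat -> bool) : Tree := fun p => a (kc p).
Definition enc (T : Tree) : nat -> bool := fun n => T (kdec n).
Lemma Dec_enc T : Dec (enc T) = T.
Proof. apply functional_extensionality; intro p. unfold Dec, enc. rewrite kdec_kc; auto. Qed.

Definition Wle (S T : Tree) (a : nat -> nat) : Prop :=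
  forall u s, S (u, s) = true -> T (u, add_restr s a) = true.

Definition Mp := meas (prodM (prodM Cantor Cantor) Baire).
Lemma Mp_sa : sigma_algebra Mp. Proof. apply generated_sa. Qed.
Lemma TreeSpace_sa : sigma_algebra (meas TreeSpace). Proof. apply generated_sa. Qed.
Lemma Baire_sa : sigma_algebra (meas Baire). Proof. apply generated_sa. Qed.
Lemma P2_sa : sigma_algebra (meas (prodM Cantor Cantor)). Proof. apply generated_sa. Qed.

Lemma Mp_p (A : (nat -> bool) * (nat -> bool) -> Prop) : meas (prodM Cantor Cantor) A -> Mp (fun q => A (fst q)).
Proof. intro HA. apply generated_gen. exists A, (fun _ => True). split; auto. split. apply (sa_True _ Baire_sa).
  intro; tauto. Qed.
Lemma P2_a (A : (nat -> bool) -> Prop) : meas Cantor A -> meas (prodM Cantor Cantor) (fun p => A (fst p)).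
Proof. intro HA. apply generated_gen. exists A, (fun _ => True). split; auto. split. apply (sa_True _ Cantor_sa).
  intro; tauto. Qed.
Lemma P2_b (A : (nat -> bool) -> Prop) : meas Cantor A -> meas (prodM Cantor Cantor) (fun p => A (snd p)).
Proof. intro HA. apply generated_gen. exists (fun _ => True), A. split. apply (sa_True _ Cantor_sa). split; auto.
  intro; tauto. Qed.
Lemma Mp_c n k : Mp (fun q => snd q n = k).
Proof. apply generated_gen. exists (fun _ => True), (fun b => b n = k). split. apply (sa_True _ P2_sa).
  split. apply generated_gen. exists n, k; intro; tauto. intro; tauto. Qed.

Lemma Tpr_meas : meas Cantor (fun a => Tpr_pred (Dec a)).
Proof. pose proof Cantor_sa as HS. unfold Tpr_pred, normal_tree, pruned, nonempty_tree, Dec.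
  repeat first
   [ apply (sa_and _ HS)
   | apply (sa_or _ HS)
   | apply (sa_impl _ HS)
   | apply (sa_all _ HS _ cnt_lb); intro
   | apply (sa_all _ HS _ cnt_ln); intro
   | apply (sa_all _ HS _ countable_nat); intro
   | apply (sa_ex _ HS _ cnt_lb); intro
   | apply (sa_ex _ HS _ cnt_ln); intro
   | apply (sa_ex _ HS _ cnt_key); intro
   | apply Cantor_cyl
   | apply (sa_const _ HS) ]. Qed.

Lemma Wle_meas (pa pb : (nat -> bool) * (nat -> bool) -> (nat -> bool)) (h : nat -> nat) :
  (forall n bb, meas (prodM Cantor Cantor) (fun p => pa p n = bb)) ->
  (forall n bb, meas (prodM Cantor Cantor) (fun p => pb p n = bb)) ->
  Mp (fun q => Wle (Dec (pa (fst q))) (Dec (pb (fst q))) (fun i => snd q (h i))).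
Proof. intros Ha Hb. pose proof Mp_sa as HS. unfold Wle, Dec.
  apply (sa_all _ HS _ cnt_lb); intro u. apply (sa_all _ HS _ cnt_ln); intro s.
  apply (sa_impl _ HS). apply (Mp_p (fun p => pa p (kc (u, s)) = true)); auto.
  eapply M_ext. apply (sa_ex _ HS _ cnt_ln (fun w q => (forall i, i < length s -> snd q (h i) = nth i w 0) /\
     pb (fst q) (kc (u, add_restr s (fun i => nth i w 0))) = true)).
  - intro w. apply (sa_and _ HS). apply (sa_all _ HS _ countable_nat); intro i. apply (sa_impl _ HS).
    apply (sa_const _ HS). apply Mp_c. apply (Mp_p (fun p => pb p _ = true)); auto.
  - intro q. split.
    + intros [w [H1 H2]]. rewrite (add_restr_ext s _ (fun i => nth i w 0)); auto.
    + intro H. exists (restr (fun i => snd q (h i)) (length s)). split.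
      intros i Hi. rewrite nth_restr; auto. rewrite (add_restr_ext s _ (fun i => snd q (h i))); auto.
      intros i Hi. rewrite nth_restr; auto. Qed.

Lemma pa_fst n bb : meas (prodM Cantor Cantor) (fun p => fst p n = bb).
Proof. apply (P2_a (fun a => a n = bb)), Cantor_cyl. Qed.
Lemma pa_snd n bb : meas (prodM Cantor Cantor) (fun p => snd p n = bb).
Proof. apply (P2_b (fun a => a n = bb)), Cantor_cyl. Qed.

Lemma Mp_eq : Mp (fun q => fst (fst q) = snd (fst q)).
Proof. pose proof Mp_sa as HS. eapply M_ext.
  apply (sa_all _ HS _ countable_nat (fun n q => (fst (fst q) n = true /\ snd (fst q) n = true) \/
      (fst (fst q) n = false /\ snd (fst q) n = false))).
  intro n. apply (sa_or _ HS); apply (sa_and _ HS);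
    first [apply (Mp_p (fun p => fst p n = _)), pa_fst | apply (Mp_p (fun p => snd p n = _)), pa_snd].
  intro q. split. intro H. apply functional_extensionality; intro n. destruct (H n) as [[-> ->]|[-> ->]]; auto.
  intros -> n. destruct (snd (fst q) n); auto. Qed.

Lemma Mp_Tpr_a : Mp (fun q => Tpr_pred (Dec (fst (fst q)))).
Proof. apply (Mp_p (fun p => Tpr_pred (Dec (fst p)))). apply (P2_a (fun a => Tpr_pred (Dec a))). apply Tpr_meas. Qed.
Lemma Mp_Tpr_b : Mp (fun q => Tpr_pred (Dec (snd (fst q)))).
Proof. apply (Mp_p (fun p => Tpr_pred (Dec (snd p)))). apply (P2_b (fun a => Tpr_pred (Dec a))). apply Tpr_meas. Qed.

Lemma Cantor_sb : standard_borel Cantor.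
Proof. exists (fun a => a). split; [|split; [|split]]; auto.
  - intros B HB; exact HB.
  - eapply M_ext. apply (sa_True _ Cantor_sa). intro a; split; eauto.
  - intros A HA. eapply M_ext. apply HA. intro a; split. eauto. intros [x [Hx <-]]; auto. Qed.

Lemma le_trans_S S T U : le_S11 S T -> le_S11 T U -> le_S11 S U.
Proof. intros [a Ha] [b Hb]. exists (fun i => a i + b i). intros u s H. rewrite <- add_restr_assoc. auto. Qed.

Lemma enc_meas : measurable_map Tpr Cantor (fun S => enc (proj1_sig S)).
Proof. intros B HB. exists (fun T => B (enc T)). split; [|intro; tauto].
  apply (HB (fun B => meas TreeSpace (fun T => B (enc T)))). apply (sa_preimage _ enc TreeSpace_sa).
  intros Bg [n [b Hb]]. eapply M_ext. apply (generated_gen _ (fun T : Tree => T (kdec n) = b)). exists (kdec n), b. intro T; tauto.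
  intro T. rewrite Hb. unfold enc. tauto. Qed.

Lemma enc_inj (S T : Tree) : enc S = enc T -> S = T.
Proof. intro H. rewrite <- (Dec_enc S), <- (Dec_enc T), H; auto. Qed.

Definition Rq (a b : nat -> bool) : Prop := a = b \/ (Tpr_pred (Dec a) /\ Tpr_pred (Dec b) /\ le_S11 (Dec a) (Dec b)).
Definition Re (a b : nat -> bool) : Prop := a = b \/ (Tpr_pred (Dec a) /\ Tpr_pred (Dec b) /\ equiv_S11 (Dec a) (Dec b)).

Lemma part2_qo : exists (X : MSpace) (R : X -> X -> Prop), C_qo X R /\
      borel_hom Tpr X le_pr nsubset_pr R (fun x y => ~ R x y).
Proof. exists Cantor, Rq. split; [split; [|split]|].
  - apply Cantor_sb.
  - exists (fun q => fst (fst q) = snd (fst q) \/ (Tpr_pred (Dec (fst (fst q))) /\ Tpr_pred (Dec (snd (fst q))) /\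
        Wle (Dec (fst (fst q))) (Dec (snd (fst q))) (fun i => snd q i))). split.
    + pose proof Mp_sa as HS. apply (sa_or _ HS). apply Mp_eq. apply (sa_and _ HS). apply Mp_Tpr_a.
      apply (sa_and _ HS). apply Mp_Tpr_b. apply (Wle_meas fst snd (fun i => i)); [apply pa_fst|apply pa_snd].
    + intros a b. unfold Rq, le_S11. simpl. split.
      * intros [H|[H1 [H2 [al Hal]]]]. exists (fun _ => 0); auto. exists al. right. auto.
      * intros [al [H|[H1 [H2 H3]]]]; auto. right; split; [|split]; eauto.
  - split. intro a; left; auto. intros a b c [<-|[H1 [H2 H3]]] [<-|[H1' [H2' H3']]]; unfold Rq; auto.
    right; split; [|split]; auto. eapply le_trans_S; eauto.
  - exists (fun S => enc (proj1_sig S)). split; [|split].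
    + apply enc_meas.
    + intros [S HS] [T HT] H. unfold le_pr in H; simpl in *. right. rewrite !Dec_enc. auto.
    + intros [S HS] [T HT] H. unfold nsubset_pr, nsubset_S11 in H; simpl in *. intros [E|[_ [_ E]]].
      apply enc_inj in E. subst. apply H; auto. rewrite !Dec_enc in E. apply H. apply le_subset; auto. Qed.

Lemma part2_eq : exists (X : MSpace) (R : X -> X -> Prop), C_eq X R /\
      borel_hom Tpr X equiv_pr neq_pr R (fun x y => ~ R x y).
Proof. exists Cantor, Re. split; [split; [|split]|].
  - apply Cantor_sb.
  - exists (fun q => fst (fst q) = snd (fst q) \/ (Tpr_pred (Dec (fst (fst q))) /\ Tpr_pred (Dec (snd (fst q))) /\
        Wle (Dec (fst (fst q))) (Dec (snd (fst q))) (fun i => snd q (2*i)) /\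
        Wle (Dec (snd (fst q))) (Dec (fst (fst q))) (fun i => snd q (2*i+1)))). split.
    + pose proof Mp_sa as HS. apply (sa_or _ HS). apply Mp_eq. apply (sa_and _ HS). apply Mp_Tpr_a.
      apply (sa_and _ HS). apply Mp_Tpr_b. apply (sa_and _ HS).
      apply (Wle_meas fst snd (fun i => 2*i)); [apply pa_fst|apply pa_snd].
      apply (Wle_meas snd fst (fun i => 2*i+1)); [apply pa_snd|apply pa_fst].
    + intros a b. unfold Re, equiv_S11, le_S11. simpl. split.
      * intros [H|[H1 [H2 [[al Hal] [be Hbe]]]]]. exists (fun _ => 0); auto. exists (mix al be). right.
        split; [|split; [|split]]; auto.
        unfold Wle. intros u' s' Hu. specialize (Hal u' s' Hu). rewrite (add_restr_ext s' _ al); auto.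
        intros; apply mix_ev.
        unfold Wle. intros u' s' Hu. specialize (Hbe u' s' Hu). rewrite (add_restr_ext s' _ be); auto.
        intros; apply mix_od.
      * intros [al [H|[H1 [H2 [H3 H4]]]]]; auto. right; split; [|split]; auto. split; eexists; eauto.
  - split; [|split]. intro a; left; auto.
    intros a b [<-|[H1 [H2 [H3 H4]]]]; [left; auto|right; split; [|split]; auto; split; auto].
    intros a b c [<-|[H1 [H2 H3]]] [<-|[H1' [H2' H3']]]; unfold Re; auto.
    right; split; [|split]; auto. destruct H3, H3'. split; eapply le_trans_S; eauto.
  - exists (fun S => enc (proj1_sig S)). split; [|split].
    + apply enc_meas.
    + intros [S HS] [T HT] H. unfold equiv_pr in H; simpl in *. right. rewrite !Dec_enc. auto.
    + intros [S HS] [T HT] H. unfold neq_pr, neq_S11 in H; simpl in *. intros [E|[_ [_ [E1 E2]]]].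
      apply enc_inj in E. subst. apply H; tauto. rewrite !Dec_enc in E1, E2. apply H. intro al; split; apply le_subset; auto. Qed.

Theorem mainTheorem2 :
  complete_for C_qo Tpr le_pr nsubset_pr /\
  complete_for C_eq Tpr equiv_pr neq_pr.
Proof. split; split.
  - apply part1_qo.
  - apply part2_qo.
  - apply part1_eq.
  - apply part2_eq. Qed.
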